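(* For any graph $H$ and any positive integer $r$, $H$ is (isomorphic to) a subgraph of $G(\mathbb{Z}^2, \sqrt{r})$ if and only if $H$ is (isomorphic to) a subgraph of $G(\mathbb{Z}^2, \sqrt{2r})$.
   Context: For $X \subseteq \mathbb{R}^m$ and $d>0$, $G(X,d)$ denotes the Euclidean distance graph with vertex set $X$ in which two vertices are adjacent if and only if their Euclidean distance is exactly $d$. *)

(* Defs.v *)
From Stdlib Require Import ZArith Reals.
From mathcomp Require Import all_boot.

Set Implicit Arguments.
Unset Strict Implicit.
Unset Printing Implicit Defensive.

Definition Z2 : Type := (Z * Z)%type.

Definition euclid_dist (p q : Z2) : R :=
  sqrt (Rplus (pow (IZR (Z.sub (fst p) (fst q))) 2) (pow (IZR (Z.sub (snd p) (snd q))) 2)).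

Definition G_Z2_adj (d : R) (p q : Z2) : Prop := euclid_dist p q = d.

Definition simple_graph (V : finType) (E : rel V) : Prop :=
  symmetric E /\ irreflexive E.

Definition subgraph_of_G_Z2 (V : finType) (E : rel V) (d : R) : Prop :=
  exists f : V -> Z2, injective f /\ forall u v, E u v -> G_Z2_adj d (f u) (f v).

(* Main.v *)
Require Import Defs.
From Stdlib Require Import ZArith Reals Lia Psatz.
From mathcomp Require Import all_boot.

Lemma adj_iff (n : nat) (p q : Z2) :
  G_Z2_adj (sqrt (INR n)) p q <->
  ((fst p - fst q) * (fst p - fst q) + (snd p - snd q) * (snd p - snd q) = Z.of_nat n)%Z.
Proof.
  unfold G_Z2_adj, euclid_dist.
  rewrite INR_IZR_INZ.
  set a := (fst p - fst q)%Z. set b := (snd p - snd q)%Z.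
  rewrite /= !Rmult_1_r -!mult_IZR -plus_IZR.
  split.
  - move=> H. apply: eq_IZR. apply: sqrt_inj => //; apply: IZR_le; nia.
  - by move=> ->.
Qed.

Lemma mul2_nat (r : nat) : Z.of_nat (2 * r)%N = (2 * Z.of_nat r)%Z.
Proof. rewrite -multE; lia. Qed.

Definition T (p : Z2) : Z2 := ((fst p - snd p)%Z, (fst p + snd p)%Z).

Definition Tinv (p : Z2) : Z2 := (((fst p + snd p) / 2)%Z, ((snd p - fst p) / 2)%Z).

Lemma even_wit (z : Z) : Z.even z = true -> exists m, z = (2 * m)%Z.
Proof. by move/Z.even_spec. Qed.

Lemma odd_wit (z : Z) : Z.even z = false -> exists m, z = (2 * m + 1)%Z.
Proof. move=> H. apply/Z.odd_spec. by rewrite -Z.negb_even H. Qed.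

Lemma Tinv_spec (p : Z2) : Z.even (fst p + snd p) = true ->
  (2 * fst (Tinv p) = fst p + snd p /\ 2 * snd (Tinv p) = snd p - fst p)%Z.
Proof.
  case: p => x y H; have [m Hm] := even_wit _ H; rewrite /Tinv; cbn [fst snd] in Hm |- *.
  have -> : (y - x = 2 * (m - x))%Z by lia.
  rewrite Hm.
  have D : forall k, ((2 * k) / 2 = k)%Z by move=> k; rewrite Z.mul_comm Z.div_mul.
  rewrite !D; split; lia.
Qed.

Lemma key (X1 Y1 X2 Y2 a b c d r : Z) :
  (2 * X1 = a + b -> 2 * Y1 = b - a -> 2 * X2 = c + d -> 2 * Y2 = d - c ->
  (a - c) * (a - c) + (b - d) * (b - d) = 2 * r ->
  (X1 - X2) * (X1 - X2) + (Y1 - Y2) * (Y1 - Y2) = r)%Z.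
Proof.
  move=> h1 h2 h3 h4 h5.
  have : (4 * ((X1 - X2) * (X1 - X2) + (Y1 - Y2) * (Y1 - Y2)) = 4 * r)%Z.
  { transitivity ((2*X1 - 2*X2) * (2*X1 - 2*X2) + (2*Y1 - 2*Y2) * (2*Y1 - 2*Y2))%Z; first ring.
    rewrite h1 h2 h3 h4.
    transitivity (2 * ((a - c) * (a - c) + (b - d) * (b - d)))%Z; first ring.
    rewrite h5; ring. }
  lia.
Qed.

Lemma par (s t j r : Z) : (s + t = 2 * j + 1 -> s * s + t * t = 2 * r -> False)%Z.
Proof.
  move=> h1 h2.
  have hs : (s = 2 * j + 1 - t)%Z by lia.
  rewrite hs in h2.
  have : ((2 * j + 1 - t) * (2 * j + 1 - t) + t * t =
          2 * (2 * j * j + 2 * j - 2 * j * t - t + t * t) + 1)%Z by ring.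
  lia.
Qed.

Theorem theorem1 (V : finType) (E : rel V) (hE : simple_graph E)
    (r : nat) (hr : (0 < r)%N) :
  subgraph_of_G_Z2 E (sqrt (INR r)) <-> subgraph_of_G_Z2 E (sqrt (INR (2 * r)%N)).
Proof.
  split.
  - case=> f [fi fe]. exists (fun v => T (f v)); split.
    + move=> u v /= H. apply: fi. move: H; rewrite /T.
      case: (f u) => a b; case: (f v) => c d /= [H1 H2].
      f_equal; lia.
    + move=> u v /fe. rewrite !adj_iff mul2_nat /T; cbn [fst snd]. nia.
  - case=> f [fi fe].
    pose M := (\max_(v : V) (Z.abs_nat (fst (f v)) + Z.abs_nat (snd (f v))))%N.
    have HM : forall v, (Z.abs (fst (f v)) <= Z.of_nat M)%Z.
    { move=> v. have := leq_bigmax (F := fun v => (Z.abs_nat (fst (f v)) + Z.abs_nat (snd (f v))))%N v.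
      rewrite -/M => /leP. clearbody M. rewrite -plusE. lia. }
    pose S (p : Z2) : Z2 := if Z.even (fst p + snd p) then p
                            else ((fst p + 2 * Z.of_nat M + 1)%Z, snd p).
    have SL : forall p, Z.even (fst (S p) + snd (S p)) = true.
    { move=> p. rewrite /S. case E1: (Z.even (fst p + snd p)) => //.
      cbn [fst snd]. apply (proj2 (Z.even_spec _)). case: (odd_wit _ E1) => m Hm. exists (m + Z.of_nat M + 1)%Z. lia. }
    exists (fun v => Tinv (S (f v))); split.
    + move=> u v /= H.
      have [A1 A2] := Tinv_spec _ (SL (f u)).
      have [B1 B2] := Tinv_spec _ (SL (f v)).
      rewrite H in A1 A2.
      have E1 : fst (S (f u)) = fst (S (f v)) by lia.
      have E2 : snd (S (f u)) = snd (S (f v)) by lia.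
      apply: fi.
      have Hu := HM u. have Hv := HM v.
      move: E1 E2. rewrite /S.
      case: (f u) Hu => a b Hu; case: (f v) Hv => c d Hv.
      cbn [fst snd] in Hu, Hv.
      case: (Z.even (a + b)); case: (Z.even (c + d)) => E1 E2; cbn [fst snd] in E1, E2; f_equal; lia.
    + move=> u v /fe. rewrite !adj_iff mul2_nat => Hd.
      have [A1 A2] := Tinv_spec _ (SL (f u)).
      have [B1 B2] := Tinv_spec _ (SL (f v)).
      apply: key A1 A2 B1 B2 _.
      move: Hd. rewrite /S.
      case: (f u) => a b; case: (f v) => c d.
      cbn [fst snd].
      case Ea: (Z.even (a + b)); case Ec: (Z.even (c + d)); cbn [fst snd] => Hd.
      * exact Hd.
      * exfalso. case: (even_wit _ Ea) => m Hm; case: (odd_wit _ Ec) => k Hk.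
        apply: (par (a - c) (b - d) (m - k - 1) _ _ Hd) => //; lia.
      * exfalso. case: (odd_wit _ Ea) => m Hm; case: (even_wit _ Ec) => k Hk.
        apply: (par (a - c) (b - d) (m - k) _ _ Hd) => //; lia.
      * have -> : (a + 2 * Z.of_nat M + 1 - (c + 2 * Z.of_nat M + 1) = a - c)%Z by lia.
        exact Hd.
Qed.
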